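(* Let $S_1,S_2$ be numerical semigroups and $a_1,a_2$ coprime positive integers with $a_2\in S_1$ and $a_1\in S_2$, and let $S=a_1S_1+a_2S_2$. Then $S_1\le_P S$ and $S_2\le_P S$, in each case with a relating polynomial having nonnegative integer coefficients; i.e. for $i=1,2$ there exist an integer $w_i\ge1$ and $f_i\in\mathbb N[x]$ with $\mathrm H_{S_i}(x^{w_i})f_i(x)=\mathrm H_S(x)$.
   Context: A numerical semigroup is a submonoid of $(\mathbb N,+)$ with finite complement in $\mathbb N$; $aA=\{ax:x\in A\}$, $A+B=\{x+y:x\in A,y\in B\}$. $\mathrm H_S(x)=\sum_{s\in S}x^s$. Numerical semigroups $S,T$ are polynomially related, $S\le_P T$, if there exist $f\in\mathbb Z[x]$ and an integer $w\ge1$ with $\mathrm H_S(x^w)f(x)=\mathrm H_T(x)$. $\mathbb N[x]$ denotes polynomials with nonnegative integer coefficients. (In the paper, $S$ is called the gluing $a_1S_1+_{a_1a_2}a_2S_2$.) *)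

(* Defs.v *)
From mathcomp Require Import all_boot all_order all_algebra.
Set Implicit Arguments. Unset Strict Implicit. Unset Printing Implicit Defensive.
Import Order.TTheory GRing.Theory Num.Theory.

Definition numerical_semigroup (S : pred nat) : Prop :=
  [/\ S 0,
      (forall x y, S x -> S y -> S (x + y)) &
      exists N, forall n, N <= n -> S n].

(* Formal power series with integer coefficients are represented by their
   coefficient sequences nat -> int. *)

(* Coefficients of the Hilbert series H_S(x) = \sum_{s in S} x^s. *)
Definition hilbert (S : pred nat) (n : nat) : int :=
  if S n then 1%R else 0%R.

(* Coefficients of the power series H_S(x^w) * f(x), for f a polynomial:
   the n-th coefficient is \sum_{k <= n} f_k * [x^(n-k)] H_S(x^w). *)
Definition hilbert_subst_mul (S : pred nat) (w : nat) (f : {poly int})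
  (n : nat) : int :=
  (\sum_(k < n.+1)
     f`_k * (if ((w %| (n - k))%N && S ((n - k) %/ w)%N) then 1 else 0))%R.

Definition poly_related (S T : pred nat) : Prop :=
  exists (w : nat) (f : {poly int}),
    1 <= w /\ forall n, hilbert_subst_mul S w f n = hilbert T n.

Definition poly_related_nat (S T : pred nat) : Prop :=
  exists (w : nat) (f : {poly int}),
    [/\ 1 <= w, (forall i, (0 <= f`_i)%R) &
        forall n, hilbert_subst_mul S w f n = hilbert T n].

(* Main.v *)
Require Import Defs.
From mathcomp Require Import all_boot all_order all_algebra.
From mathcomp Require Import zify.
Set Implicit Arguments. Unset Strict Implicit. Unset Printing Implicit Defensive.
Import Order.TTheory GRing.Theory Num.Theory.

Section Gen.
Variables (T1 T2 S : pred nat) (b1 b2 : nat).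
Hypothesis T1add : forall x y, T1 x -> T1 y -> T1 (x + y).
Hypothesis T2add : forall x y, T2 x -> T2 y -> T2 (x + y).
Hypotheses (b1p : 0 < b1) (b2p : 0 < b2) (cop : coprime b1 b2).
Hypotheses (T1b2 : T1 b2) (T2b1 : T2 b1).
Hypothesis Sdef : forall n, S n <-> exists x y, [/\ T1 x, T2 y & n = b1 * x + b2 * y].

Definition Ap y := T2 y && ~~ ((b1 <= y) && T2 (y - b1)).

Lemma T1mul x t : T1 x -> T1 (x + t * b2).
Proof.
elim: t => [|t IH] Hx; first by rewrite mul0n addn0.
by rewrite mulSn addnCA addnC; apply: T1add => //; apply: IH.
Qed.

Lemma T2mul x t : T2 x -> T2 (x + t * b1).
Proof.
elim: t => [|t IH] Hx; first by rewrite mul0n addn0.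
by rewrite mulSn addnCA addnC; apply: T2add => //; apply: IH.
Qed.

Lemma apdec y : T2 y -> exists y0 t, Ap y0 /\ y = y0 + t * b1.
Proof.
elim: y {-2}y (leqnn y) => [|m IH] y Hy H2.
  exists y, 0; split; last by rewrite addn0.
  by rewrite /Ap H2 /=; move: Hy; rewrite leqn0 => /eqP ->; rewrite leqNgt b1p.
case Hap: (Ap y); first by exists y, 0; rewrite addn0.
move: Hap; rewrite /Ap H2 /= => /negbFE /andP [Hle H2'].
have [y0 [t [A E]]] := IH (y - b1) ltac:(lia) H2'.
exists y0, t.+1; split => //; lia.
Qed.

Definition P n k := [&& b2 %| k, Ap (k %/ b2), b1 %| n - k & T1 ((n - k) %/ b1)].

Lemma Pex n : S n -> exists k, k <= n /\ P n k.
Proof.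
move/Sdef => [x [y [Hx Hy ->]]].
have [y0 [t [A E]]] := apdec Hy.
exists (b2 * y0); split; first by rewrite E; nia.
rewrite /P.
have -> : b1 * x + b2 * y - b2 * y0 = b1 * (x + t * b2) by rewrite E; nia.
rewrite dvdn_mulr // mulKn // A dvdn_mulr //= mulKn //.
exact: T1mul.
Qed.

Lemma PS n k : k <= n -> P n k -> S n.
Proof.
move=> Hk /and4P [/dvdnP [y Ey] A /dvdnP [x Ex] H1].
apply/Sdef; exists x, y.
move: A H1; rewrite Ex Ey mulnK // mulnK // => /andP [H2 _] H1.
split => //; lia.
Qed.

Lemma Puniq n k k' : k <= n -> k' <= n -> P n k -> P n k' -> k = k'.
Proof.
wlog le : k k' / k <= k'.
  move=> W Hk Hk' A B; case: (leqP k k') => h; first exact: W.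
  by symmetry; apply: W => //; apply: ltnW.
move=> Hk Hk' /and4P [/dvdnP [y Ey] A /dvdnP [x Ex] _]
              /and4P [/dvdnP [y' Ey'] A' /dvdnP [x' Ex'] _].
move: A A'; rewrite Ey Ey' !mulnK // => A A'.
have d : b1 %| b2 * (y' - y).
  apply/dvdnP; exists (x - x'); nia.
rewrite Gauss_dvdr // in d.
move/dvdnP: d => [m Em].
case: m Em => [|m] Em; first by nia.
move: A'; rewrite /Ap => /andP [_ /negP]; case; apply/andP; split; first by nia.
have -> : y' - b1 = y + m * b1 by nia.
apply: T2mul; by case/andP: A.
Qed.

End Gen.

Lemma gen (T1 T2 S : pred nat) (b1 b2 : nat) :
  numerical_semigroup T1 -> numerical_semigroup T2 ->
  0 < b1 -> 0 < b2 -> coprime b1 b2 -> T1 b2 -> T2 b1 ->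
  (forall n, S n <-> exists x y, [/\ T1 x, T2 y & n = b1 * x + b2 * y]) ->
  poly_related_nat T1 S.
Proof.
move=> [_ T1add _] [_ T2add [N HN]] b1p b2p cop T1b2 T2b1 Sdef.
have bound : forall y, Ap T2 b1 y -> y < N + b1.
  move=> y /andP [_ /negP H]; rewrite ltnNge; apply/negP => Hy; apply: H.
  apply/andP; split; [lia | apply: HN; lia].
pose f : {poly int} := (\poly_(k < (b2 * (N + b1))%N)
   (if ((b2 %| k) && Ap T2 b1 (k %/ b2))%N then 1 else 0))%R.
have fk : forall k, (f`_k = if ((b2 %| k) && Ap T2 b1 (k %/ b2))%N then 1 else 0)%R.
  move=> k; rewrite coef_poly; case: ltnP => // h.
  case: (b2 %| k) => //=; case A: (Ap T2 b1 _) => //.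
  have := bound _ A; rewrite ltnNge leq_divRL // mulnC h //.
exists b1, f; split => //.
  by move=> i; rewrite fk; case: ifP.
move=> n; rewrite /hilbert_subst_mul /hilbert.
have term : forall k : 'I_n.+1, (f`_k * (if ((b1 %| n - k) && T1 ((n - k) %/ b1))%N then 1 else 0)
   = if P T1 T2 b1 b2 n k then 1 else 0)%R.
  move=> k; rewrite fk /P.
  by case: (b2 %| k); case: (Ap _ _ _); case: (b1 %| _); case: (T1 _);
     rewrite /= ?mul1r ?mul0r.
rewrite (eq_bigr _ (fun k _ => term k)).
case Sn: (S n).
  have [k0 [Hk0 Pk0]] := Pex T1add b1p b2p cop T1b2 T2b1 Sdef Sn.
  have lk : k0 < n.+1 by [].
  rewrite (bigD1 (Ordinal lk)) //= Pk0 big1 ?addr0 //.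
  move=> i /eqP ne; case Pi: (P _ _ _ _ _ _) => //; exfalso; apply: ne.
  apply: val_inj => /=.
  apply: (Puniq T2add b1p b2p cop T1b2 T2b1 _ _ Pi Pk0) => //; by rewrite -ltnS.
rewrite big1 // => i _; case Pi: (P _ _ _ _ _ _) => //.
have : S n by apply: (PS b1p b2p cop T1b2 T2b1 Sdef _ Pi); rewrite -ltnS.
by rewrite Sn.
Qed.

Theorem theorem6 (S1 S2 S : pred nat) (a1 a2 : nat) :
  numerical_semigroup S1 -> numerical_semigroup S2 ->
  0 < a1 -> 0 < a2 -> coprime a1 a2 ->
  S1 a2 -> S2 a1 ->
  (forall n, S n <-> exists x y, [/\ S1 x, S2 y & n = a1 * x + a2 * y]) ->
  poly_related_nat S1 S /\ poly_related_nat S2 S.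
Proof.
move=> N1 N2 p1 p2 c h1 h2 Sd; split; first exact: (gen N1 N2 p1 p2 c h1 h2 Sd).
apply: (gen N2 N1 p2 p1 _ h2 h1); first by rewrite coprime_sym.
move=> n; rewrite Sd; split=> [[x [y [A B ->]]]|[y [x [A B ->]]]].
  by exists y, x; split => //; apply: addnC.
by exists x, y; split => //; apply: addnC.
Qed.
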